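(* Let $G$ be a finite group and $p$ a prime. Let $\mathcal X^c$ be the set of $G$-conjugacy classes of $p$-selfcentralizing $p$-subgroups of $G$; sums $\sum_{[H]},\sum_{[K]}$ run over $\mathcal X^c$ and sums $\sum_H$ over $p$-selfcentralizing $p$-subgroups $H$. Then the following give, for each category, a weighting $k^{[H]}$ on $\mathcal X^c$, a coweighting $k_K$ on objects, and the Euler characteristic: (i) $\mathcal T^c_G$: $k^{[H]}=\sum_{[K]}[\mu]([H],[K])$, $k_K=|G|^{-1}\sum_H\mu(H,K)$, $\chi=\sum_{[H],[K]}[\mu]([H],[K])$; (ii) $\mathcal L^c_G$: $k^{[H]}=\sum_{[K]}[\mu]([H],[K])|C_G(K)|_{p'}$, $k_K=|G|^{-1}|C_G(K)|_{p'}\sum_H\mu(H,K)$, $\chi=\sum_{[H],[K]}[\mu]([H],[K])|C_G(K)|_{p'}$; (iii) $\mathcal F^c_G$: $k^{[H]}=\sum_{[K]}[\mu]([H],[K])|C_G(K)|$, $k_K=|G|^{-1}|C_G(K)|\sum_H\mu(H,K)$, $\chi=\sum_{[H],[K]}[\mu]([H],[K])|C_G(K)|$; (iv) $\mathcal O^c_G$: $k^{[H]}=|H|\sum_{[K]}[\mu]([H],[K])$, $k_K=|G|^{-1}\sum_H|H|\mu(H,K)$, $\chi=\sum_{[H],[K]}|H|[\mu]([H],[K])$; (v) $\widetilde{\mathcal F}^c_G$: $k^{[H]}=|H|\sum_{[K]}[\mu]([H],[K])|C_G(K)|_{p'}$, $k_K=|G|^{-1}|C_G(K)|_{p'}\sum_H|H|\mu(H,K)$,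 $\chi=\sum_{[H],[K]}|H|[\mu]([H],[K])|C_G(K)|_{p'}$.
   Context: A $p$-subgroup $H\le G$ is $p$-selfcentralizing if $Z(H)=C_H(H)$ is a Sylow $p$-subgroup of $C_G(H)$. $N_G(H,K)=\{g\in G:g^{-1}Hg\le K\}$; $O^p(X)$ is the smallest normal subgroup of $X$ with $p$-group quotient; $n_{p'}$ is the largest divisor of $n$ prime to $p$. The categories $\mathcal T^c_G,\mathcal L^c_G,\mathcal F^c_G,\mathcal O^c_G,\widetilde{\mathcal F}^c_G$ have as objects the $p$-selfcentralizing $p$-subgroups of $G$, with morphisms $N_G(H,K)$, $O^p(C_G(H))\backslash N_G(H,K)$, $C_G(H)\backslash N_G(H,K)$, $N_G(H,K)/K$, $C_G(H)\backslash N_G(H,K)/K$ respectively, composition induced by multiplication. For such $\mathcal C$, $|\mathcal C(H,K)|$ depends only on conjugacy classes; a weighting on $\mathcal X^c$ is a function $k^{[\bullet]}$ with $\sum_{[K]\in\mathcal X^c}|\mathcal C(H,K)|k^{[K]}=1$ for every object $H$; a coweighting is $k_\bullet:\mathrm{Ob}(\mathcal C)\to\mathbb Q$ with $\sum_Hk_H|\mathcal C(H,K)|=1$ for every object $K$; $\chi$ is Leinster's Euler characteristic (sum of the values of a weighting or coweighting of $\mathcal C$, when both exist). $\mu(H,K)$ is the Möbius function of the poset of all subgroups of $G$, and $[\mu]([H],[K])=|N_G(H)|^{-1}\sum_{L\in[K]}\mu(H,L)$, $[K]$ the set of $G$-conjugates of $K$. *)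

(* Defs.v *)
From mathcomp Require Import all_boot all_order all_algebra all_fingroup all_solvable.
Set Implicit Arguments. Unset Strict Implicit. Unset Printing Implicit Defensive.
Import GRing.Theory Num.Theory.

Local Open Scope group_scope.

Section Defs.
Variable gT : finGroupType.
Implicit Types (G X H K : {set gT}) (p : nat).

Definition Op_res p X : {set gT} :=
  \bigcap_(N : {group gT} | (N <| X) && p.-group (X / N)) (N : {set gT}).

Definition psc_obj p G H : bool :=
  [&& group_set H, H \subset G, p.-group H & p.-Sylow('C_G(H)) 'Z(H)].

Definition objs p G : {set {set gT}} := [set H | psc_obj p G H].

Definition Xc p G : {set {set {set gT}}} := [set H :^: G | H in objs p G].

Definition NGHK G H K : {set gT} := [set g in G | H :^ g \subset K].

(* cardinalities of the morphism sets *)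
Definition morT G H K : nat := #|NGHK G H K|.
Definition morL p G H K : nat :=
  #|[set Op_res p 'C_G(H) :* g | g in NGHK G H K]|.
Definition morF G H K : nat := #|[set 'C_G(H) :* g | g in NGHK G H K]|.
Definition morO G H K : nat := #|[set g *: K | g in NGHK G H K]|.
Definition morFt G H K : nat := #|[set ('C_G(H) :* g) * K | g in NGHK G H K]|.

(* Moebius function of the poset of all subgroups of G (fuel = recursion
   on the order of the upper argument; every L strictly between is a
   subgroup of G as soon as K is). *)
Fixpoint mu_rec (n : nat) (H K : {set gT}) : rat :=
  match n with
  | 0 => 0%R
  | n'.+1 =>
    if H \subset K then
      (if H == K then 1
       else - \sum_(L : {set gT} | [&& group_set L, H \subset L & L \proper K])
                mu_rec n' H L)%R
    else 0%R
  end.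
Definition mu (H K : {set gT}) : rat := mu_rec #|K|.+1 H K.

Definition cmu G H K : rat :=
  ((#|'N_G(H)|%:R)^-1 * \sum_(L in K :^: G) mu H L)%R.

Definition is_weighting p G (mor : {set gT} -> {set gT} -> nat)
    (k : {set {set gT}} -> rat) : Prop :=
  forall H, H \in objs p G ->
    (\sum_(c in Xc p G) (mor H (repr c))%:R * k c = 1)%R.

Definition is_coweighting p G (mor : {set gT} -> {set gT} -> nat)
    (k : {set gT} -> rat) : Prop :=
  forall K, K \in objs p G ->
    (\sum_(H in objs p G) k H * (mor H K)%:R = 1)%R.

(* Statement of "k^ is a weighting, k_ a coweighting, and chi = e"
   (chi = sum of the values of the weighting = sum of those of the
   coweighting, Leinster). *)
Definition weight_data p G (mor : {set gT} -> {set gT} -> nat)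
    (kw : {set {set gT}} -> rat) (kc : {set gT} -> rat) (e : rat) : Prop :=
  [/\ is_weighting p G mor kw, is_coweighting p G mor kc,
      (\sum_(c in Xc p G) kw c = e)%R & (\sum_(K in objs p G) kc K = e)%R].

End Defs.

(* Main.v *)
Require Import Defs.
From mathcomp Require Import all_boot all_order all_algebra all_fingroup all_solvable.
From mathcomp Require Import ring.
Set Implicit Arguments. Unset Strict Implicit. Unset Printing Implicit Defensive.
Import GRing.Theory Num.Theory.
Local Open Scope group_scope.
Section Mobius.
Variable gT : finGroupType.
Implicit Types (H K L M N : {set gT}).

Definition ival H K : pred {set gT} :=
  fun L => [&& group_set L, H \subset L & L \subset K].

Lemma mu_fuel_aux n : forall m H K, (#|K| < n)%N -> (#|K| < m)%N ->
  mu_rec n H K = mu_rec m H K.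
Proof.
elim: n => [|n IH] [|m] H K //= lt1 lt2.
case: ifP => // _; case: ifP => // _; congr (- _)%R.
apply: eq_bigr => L /and3P[_ _ pLK].
have := proper_card pLK => ltLK.
by apply: IH; apply: leq_trans ltLK _.
Qed.

Lemma mu_fuel n H K : (#|K| < n)%N -> mu_rec n H K = mu H K.
Proof. by move=> lt; rewrite /mu; apply: mu_fuel_aux. Qed.

Lemma mu_unfold H K : mu H K =
  if H \subset K then
    (if H == K then 1
     else - \sum_(L | [&& group_set L, H \subset L & L \proper K]) mu H L)%R
  else 0%R.
Proof.
rewrite {1}/mu /=; case: ifP => // _; case: ifP => // _; congr (- _)%R.
apply: eq_bigr => L /and3P[_ _ pLK]; apply: mu_fuel.
exact: proper_card.
Qed.

Lemma mu0 H K : ~~ (H \subset K) -> mu H K = 0%R.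
Proof. by move=> nHK; rewrite mu_unfold (negbTE nHK). Qed.

Lemma mu_id H : mu H H = 1%R.
Proof. by rewrite mu_unfold subxx eqxx. Qed.

Lemma mu_sum H K : group_set K -> H \subset K ->
  (\sum_(L | ival H K L) mu H L = (H == K)%:R)%R.
Proof.
move=> gK sHK; case: eqP => [eHK | neHK].
  subst H.
  rewrite (big_pred1 K) ?mu_id // => L.
  rewrite /ival; apply/idP/eqP => [/and3P[_ a b]|->]; last by rewrite gK subxx.
  by apply/eqP; rewrite eqEsubset a b.
rewrite (bigD1 K) /=; last by rewrite /ival gK sHK subxx.
rewrite mu_unfold sHK; case: eqP => // _.
rewrite (eq_bigl (fun L => [&& group_set L, H \subset L & L \proper K])) ?addNr //.
move=> L; rewrite /ival properEneq; case: (group_set L) => //=.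
by case: (H \subset L); case: (L != K); case: (L \subset K).
Qed.


Lemma ival_trans H K M N :
  ival H K M && ival M K N = ival H N M && ival H K N.
Proof.
rewrite /ival.
case gM: (group_set M); case gN: (group_set N) => //=; rewrite ?andbF //.
apply/idP/idP.
  case/andP=> /andP[a b] /andP[d e]; rewrite a d e /=.
  by rewrite (subset_trans a d).
case/andP=> /andP[a b] /andP[d e]; rewrite a b e /=.
by rewrite (subset_trans b e).
Qed.

Lemma mu_dual H K : group_set H -> group_set K -> H \subset K ->
  (\sum_(M | ival H K M) mu M K = (H == K)%:R)%R.
Proof.
move=> gH gK sHK.
pose f M := (\sum_(N | ival M K N) mu N K - (M == K)%:R)%R.
have claim1 H0 : group_set H0 -> H0 \subset K ->
    (\sum_(M | ival H0 K M) mu H0 M * f M = 0)%R.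
  move=> gH0 sH0K; rewrite /f.
  under eq_bigr do rewrite mulrBr mulr_sumr.
  rewrite sumrB.
  have -> : (\sum_(M | ival H0 K M) mu H0 M * (M == K)%:R = mu H0 K)%R.
    rewrite (bigD1 K) /=; last by rewrite /ival gK sH0K subxx.
    rewrite eqxx mulr1 big1 ?addr0 // => M /andP[_ /negbTE->]; exact: mulr0.
  rewrite (exchange_big_dep (ival H0 K)) /=; last first.
    move=> M N /and3P[_ a _] /and3P[b c d]; rewrite /ival b d andbT.
    exact: subset_trans a c.
  rewrite (eq_bigr (fun N => (H0 == N)%:R * mu N K)%R); last first.
    move=> N iN; rewrite (eq_bigl (ival H0 N)); last first.
      by move=> M; rewrite ival_trans iN andbT.
    case/and3P: iN => gN sH0N _.
    by rewrite -mulr_suml mu_sum.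
  rewrite (bigD1 H0) /=; last by rewrite /ival gH0 subxx sH0K.
  rewrite eqxx mul1r big1 ?addr0 ?subrr // => N /andP[_ neN].
  by rewrite eq_sym (negbTE neN) mul0r.
have claim2 n : forall H0, group_set H0 -> H0 \subset K ->
    (#|K| - #|H0| < n)%N -> f H0 = 0%R.
  elim: n => // n IH H0 gH0 sH0K lt.
  have := claim1 H0 gH0 sH0K.
  rewrite (bigD1 H0) /=; last by rewrite /ival gH0 subxx sH0K.
  rewrite big1 ?addr0 ?mu_id ?mul1r // => M /andP[/and3P[gM sHM sMK] neM].
  rewrite IH ?mulr0 //.
  have pHM : H0 \proper M by rewrite properEneq eq_sym neM sHM.
  have := proper_card pHM; have := subset_leq_card sMK => l1 l2.
  rewrite -ltnS; apply: leq_trans lt.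
  rewrite ltnS; apply: ltn_sub2l => //; apply: leq_trans l2 l1.
apply/eqP; rewrite -subr_eq0; apply/eqP.
by apply: (claim2 (#|K| - #|H|).+1) => //.
Qed.

End Mobius.
Section Objs.
Variables (gT : finGroupType) (G : {group gT}) (p : nat).
Implicit Types (H K L M : {set gT}).

Lemma objsP H : H \in objs p G ->
  [/\ group_set H, H \subset G, p.-group H & p.-Sylow('C_G(H)) 'Z(H)].
Proof. by rewrite inE /psc_obj => /and4P. Qed.

Lemma centGJ H x : x \in G -> 'C_G(H :^ x) = 'C_G(H) :^ x.
Proof. by move=> xG; rewrite centJ -{1}(conjGid xG) conjIg. Qed.

Lemma centerJ' H x : 'Z(H :^ x) = 'Z(H) :^ x.
Proof. by rewrite /center centJ conjIg. Qed.

Lemma objs_conj H x : H \in objs p G -> x \in G -> H :^ x \in objs p G.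
Proof.
move=> /objsP[gH sHG pH sylH] xG; rewrite inE /psc_obj group_setJ gH.
have sHxG : H :^ x \subset G by rewrite -(conjGid xG) conjSg.
rewrite sHxG /= /pgroup cardJg -/(pgroup p H) pH /=.
pose HH := Group gH; rewrite centGJ // centerJ'.
have := (@pHallJ2 _ p [group of 'C_G(HH)] [group of 'Z(HH)] x); rewrite sylH; exact.
Qed.

Lemma center_normal_cent H : H \subset G -> 'Z(H) <| 'C_G(H).
Proof.
move=> sHG; rewrite /normal; apply/andP; split.
  exact: setSI.
apply: cents_norm; apply: subset_trans (subsetIr _ _) _.
by apply: centS; apply: center_sub.
Qed.

Lemma objs_up H L M : H \in objs p G -> L \in objs p G -> group_set M ->
  H \subset M -> M \subset L -> M \in objs p G.
Proof.
move=> OH OL gM sHM sML.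
have [gH sHG pH sylH] := objsP OH; have [gL sLG pL _] := objsP OL.
pose MM := Group gM.
have sMG : M \subset G by apply: subset_trans sLG.
pose LL := Group gL.
have pM : p.-group M by apply: (@pgroupS _ p LL MM).
rewrite inE /psc_obj gM sMG pM /=.
have sZC : 'Z(M) \subset 'C_G(MM) by apply: setSI.
have pZ : p.-group 'Z(M) by apply: (@pgroupS _ p MM [group of 'Z(MM)]) => //; apply: center_sub.
have [P sylP sZP] := @Sylow_superset p gT [group of 'C_G(MM)] [group of 'Z(MM)] sZC pZ.
have sPC : P \subset 'C_G(H).
  apply: subset_trans (pHall_sub sylP) _; apply: setIS; exact: centS.
have sPZ : P \subset 'Z(H).
  pose HH := Group gH.
  rewrite (@sub_normal_Hall _ p [group of 'C_G(HH)] [group of 'Z(HH)] P sylH (center_normal_cent sHG) sPC).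
  exact: pHall_pgroup sylP.
have sPZM : P \subset 'Z(M).
  apply/subsetIP; split.
    apply: subset_trans sHM; apply: subset_trans sPZ _; exact: center_sub.
  apply: subset_trans (pHall_sub sylP) _; exact: subsetIr.
suff -> : 'Z(M) = P by [].
by apply/eqP; rewrite eqEsubset sZP sPZM.
Qed.

End Objs.
Section DC.
Variables (gT : finGroupType) (A K : {group gT}).

Lemma dc_refl x : x \in (A :* x) * K.
Proof. by have := mem_mulg (rcoset_refl A x) (group1 K); rewrite mulg1. Qed.

Lemma dc_sym x y : y \in (A :* x) * K -> x \in (A :* y) * K.
Proof.
case/mulsgP=> y1 k; rewrite mem_rcoset => ay1 kK ->.
apply/mulsgP; exists ((y1 * x^-1)^-1 * (y1 * k)) k^-1.
- by rewrite mem_rcoset mulgK groupV.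
- by rewrite groupV.
- by rewrite mulgA mulgK invMg invgK mulgKV.
Qed.

Lemma dc_sub x y : y \in (A :* x) * K -> (A :* y) * K \subset (A :* x) * K.
Proof.
move=> yD; have sy : [set y] \subset (A :* x) * K by rewrite sub1set.
apply: subset_trans (mulSg _ (mulgS _ sy)) _.
by rewrite !mulgA mulGid -!mulgA mulGid.
Qed.

Lemma dc_eq x y : y \in (A :* x) * K -> (A :* y) * K = (A :* x) * K.
Proof.
move=> yD; apply/eqP; rewrite eqEsubset dc_sub //.
by apply: dc_sub; apply: dc_sym.
Qed.

Lemma card_dcosets (S : {set gT}) m :
  (forall x a k, x \in S -> a \in A -> k \in K -> a * x * k \in S) ->
  (forall x, x \in S -> #|(A :* x) * K| = m) ->
  (#|[set ((A :* x) * K)%g | x in S]| * m)%N = #|S|.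
Proof.
move=> stab cm; pose f x := ((A :* x) * K)%g.
have fS x : x \in S -> f x \subset S.
  move=> xS; apply/subsetP=> y /mulsgP[y1 k]; rewrite mem_rcoset => ay1 kK ->.
  by rewrite -(mulgKV x y1) stab.
rewrite -sum_nat_const -sum1_card.
rewrite (partition_big f (mem (f @: S))) /=; last by move=> x xS; apply: imset_f.
apply: eq_bigr => B /imsetP[x0 x0S ->].
rewrite -(cm x0 x0S) sum1_card; apply: eq_card => x /=.
rewrite [in RHS]unfold_in /=; apply/idP/andP => [xD | [xS /eqP <-]]; last exact: dc_refl.
by split; [apply: (subsetP (fS x0 x0S)) | apply/eqP; apply: dc_eq].
Qed.

End DC.
Lemma Op_central (gT : finGroupType) (p : nat) (C Z : {group gT}) :
  p.-Sylow(C) Z -> C \subset 'C(Z) ->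
  exists2 Q : {group gT}, Op_res p C = Q & Q \subset C /\ #|Q| = (#|C|`_p^')%N.
Proof.
move=> sylZ cCZ.
have sZC := pHall_sub sylZ.
have nZC : Z <| C by rewrite /normal sZC cents_norm.
have [Q] := splitsP (SchurZassenhaus_split (pHall_Hall sylZ) nZC).
case/complP => tiZQ defC.
have cardC : #|C| = (#|Z| * #|Q|)%N by rewrite -defC TI_cardMg.
have cardQ : #|Q| = (#|C|`_p^')%N.
  apply/eqP; rewrite -(eqn_pmul2l (cardG_gt0 Z)) -cardC (card_Hall sylZ).
  by rewrite partnC.
have sQC : Q \subset C by rewrite -defC mulG_subr.
have nQC : C \subset 'N(Q).
  rewrite -defC mul_subG ?normG //; apply: cents_norm.
  by rewrite centsC; apply: subset_trans cCZ.
have pCQ : p.-group (C / Q).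
  rewrite /pgroup card_quotient // -divgS // cardC cardQ.
  by rewrite mulnK ?(card_Hall sylZ) ?part_pnat // part_gt0.
exists Q => //.
apply/eqP; rewrite eqEsubset; apply/andP; split.
  by apply: (bigcap_inf Q) => /=; rewrite /normal sQC nQC.
apply/bigcapsP => N /andP[nsNC pCN].
have nNQ : Q \subset 'N(N) by apply: subset_trans sQC (normal_norm nsNC).
rewrite -(quotient_sub1 nNQ).
have p'Q : p^'.-group Q by rewrite /pgroup cardQ part_pnat.
have p'QN : p^'.-group (Q / N) := quotient_pgroup _ p'Q.
have pQN : p.-group (Q / N) by apply: pgroupS (quotientS _ sQC) pCN.
by rewrite (card_le1_trivg (G := [group of Q / N])) ?(pnat_1 pQN p'QN).

Qed.
Section Mor.
Variables (gT : finGroupType) (G : {group gT}) (p : nat).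
Implicit Types (H K L M : {set gT}).

Lemma NGHK_stab H (K : {group gT}) x a k : K \subset G ->
  x \in NGHK G H K -> a \in 'C_G(H) -> k \in K -> a * x * k \in NGHK G H K.
Proof.
move=> sKG; rewrite inE => /andP[xG sHxK] /setIP[aG aC] kK.
have kG : k \in G by apply: (subsetP sKG).
rewrite inE.
rewrite !groupM //= !conjsgM.
have aN : a \in 'N(H) by apply: (subsetP (cent_sub H)).
rewrite (normP aN) -(conjGid kK) conjSg //.
Qed.


Lemma centK H K x : H \in objs p G -> K \in objs p G -> x \in NGHK G H K ->
  'C_G(H) :^ x :&: K = 'Z(H) :^ x.
Proof.
move=> OH OK; rewrite inE => /andP[xG sHxK].
have OHx := objs_conj OH xG.
have [gHx _ _ sylHx] := objsP OHx.
have [gK _ pK _] := objsP OK.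
pose HH := Group gHx; pose KK := Group gK.
rewrite -centGJ // -centerJ'.
have pQ : p.-group ('C_G(HH) :&: KK) by apply: (@pgroupS _ p KK [group of 'C_G(HH) :&: KK]) => //; apply: subsetIr.
have sZQ : 'Z(HH) \subset 'C_G(HH) :&: KK.
  rewrite subsetI (pHall_sub sylHx) /=; apply: subset_trans sHxK; exact: center_sub.
exact: (@sub_pHall _ p [group of 'Z(HH)] [group of 'C_G(HH)] [group of 'C_G(HH) :&: KK] sylHx pQ sZQ (subsetIl _ _)).
Qed.

Lemma morF_card H K : H \in objs p G -> K \in objs p G ->
  (morF G H K * #|'C_G(H)|)%N = #|NGHK G H K|.
Proof.
move=> OH OK; have [gH sHG _ _] := objsP OH; have [gK sKG _ _] := objsP OK.
pose HH := Group gH; pose KK := Group gK.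
rewrite /morF.
have -> : [set 'C_G(H) :* g | g in NGHK G H K] =
          [set ('C_G(HH) :* g) * (1%G : {group gT}) | g in NGHK G H K].
  by apply: eq_imset => g; rewrite mulg1.
apply: card_dcosets => [x a k xN aC|x _]; last by rewrite mulg1 card_rcoset.
rewrite inE => /eqP->; rewrite mulg1.
by have := NGHK_stab (K := KK) sKG xN aC (group1 KK); rewrite mulg1.
Qed.

Lemma morO_card H K : H \in objs p G -> K \in objs p G ->
  (morO G H K * #|K|)%N = #|NGHK G H K|.
Proof.
move=> OH OK; have [gH sHG _ _] := objsP OH; have [gK sKG _ _] := objsP OK.
pose HH := Group gH; pose KK := Group gK.
rewrite /morO.
have -> : [set g *: K | g in NGHK G H K] =
          [set ((1%G : {group gT}) :* g) * KK | g in NGHK G H K].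
  by apply: eq_imset => g; rewrite mul1g.
apply: card_dcosets => [x a k xN|x _]; last by rewrite mul1g card_lcoset.
rewrite inE => /eqP-> kK; rewrite mul1g.
by have := NGHK_stab (K := KK) sKG xN (group1 [group of 'C_G(HH)]) kK; rewrite mul1g.
Qed.

Lemma morL_card H K : H \in objs p G -> K \in objs p G ->
  (morL p G H K * #|'C_G(H)|`_p^')%N = #|NGHK G H K|.
Proof.
move=> OH OK; have [gH sHG _ sylH] := objsP OH; have [gK sKG _ _] := objsP OK.
pose HH := Group gH; pose KK := Group gK.
have cCZ : 'C_G(HH) \subset 'C('Z(HH)).
  apply: subset_trans (subsetIr _ _) _; apply: centS; exact: center_sub.
have [Q eQ [sQC cardQ]] := @Op_central gT p [group of 'C_G(HH)] [group of 'Z(HH)] sylH cCZ.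
rewrite /morL -cardQ.
have eQ' : Op_res p 'C_G(H) = Q by exact: eQ.
rewrite eQ'.
have -> : [set (Q : {set gT}) :* g | g in NGHK G H K] =
          [set (Q :* g) * (1%G : {group gT}) | g in NGHK G H K].
  by apply: eq_imset => g; rewrite mulg1.
apply: card_dcosets => [x a k xN aQ|x _]; last by rewrite mulg1 card_rcoset.
rewrite inE => /eqP->; rewrite mulg1.
have aC : a \in 'C_G(H) by apply: (subsetP sQC).
by have := NGHK_stab (K := KK) sKG xN aC (group1 KK); rewrite mulg1.
Qed.

Lemma morFt_card H K : H \in objs p G -> K \in objs p G ->
  (morFt G H K * (#|'C_G(H)|`_p^' * #|K|))%N = #|NGHK G H K|.
Proof.
move=> OH OK; have [gH sHG _ sylH] := objsP OH; have [gK sKG _ _] := objsP OK.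
pose HH := Group gH; pose KK := Group gK.
rewrite /morFt.
have -> : [set ('C_G(H) :* g) * K | g in NGHK G H K] =
          [set ('C_G(HH) :* g) * KK | g in NGHK G H K] by [].
apply: card_dcosets => [x a k xN aC kK|x xN]; first exact: (NGHK_stab (K := KK) sKG xN aC kK).
have e1 : 'C_G(HH) :* x = x *: ('C_G(HH) :^ x) by rewrite conjsgE lcosetKV.
rewrite e1 -mulgA card_lcoset.
have := mul_cardG [group of 'C_G(HH) :^ x] KK.
rewrite /= (centK OH OK xN) !cardJg (@card_Hall _ p [group of 'C_G(HH)] [group of 'Z(HH)] sylH).
rewrite -{1}(partnC p (cardG_gt0 [group of 'C_G(HH)])) /= -mulnA.
rewrite mulnC => /eqP; rewrite eqn_pmul2r ?part_gt0 // => /eqP ->.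
by [].
Qed.

End Mor.
Lemma mu_conj (gT : finGroupType) (H K : {set gT}) x : mu (H :^ x) (K :^ x) = mu H K.
Proof.
rewrite /mu cardJg; move: #|K|.+1 => n.
elim: n H K => [|n IH] H K //=.
rewrite conjSg (inj_eq (@conjsg_inj _ x)).
case: ifP => // _; case: ifP => // _; congr (- _)%R.
rewrite (reindex_inj (@conjsg_inj _ x)) /=.
apply: eq_big => [L|L _]; first by rewrite group_setJ conjSg properJ.
exact: IH.
Qed.

Section Classes.
Variables (gT : finGroupType) (G : {group gT}) (p : nat).
Implicit Types (H K L M : {set gT}).
Local Notation Ob := (objs p G).
Local Notation X := (Xc p G).

Lemma conjugates_stable M L x : x \in G -> L \in M :^: G -> L :^ x \in M :^: G.
Proof.
move=> xG /imsetP[y yG ->]; rewrite -conjsgM; apply: imset_f; exact: groupM.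
Qed.

Lemma conjugates_stableE M L x : x \in G -> (L :^ x \in M :^: G) = (L \in M :^: G).
Proof.
move=> xG; apply/idP/idP => [h|]; last exact: conjugates_stable.
by have := conjugates_stable (groupVr xG) h; rewrite conjsgK.
Qed.

Lemma conjugates_refl M : M \in M :^: G.
Proof. by apply/imsetP; exists 1; rewrite ?group1 ?conjsg1. Qed.

Lemma conjugates_eq M L : L \in M :^: G -> L :^: G = M :^: G.
Proof.
case/imsetP=> x xG ->; rewrite conjugates_conj lcoset_id //.
Qed.

Lemma Xc_repr c : c \in X -> repr c \in Ob /\ c = repr c :^: G.
Proof.
case/imsetP=> M OM ->.
have : repr (M :^: G) \in M :^: G by apply: mem_repr (conjugates_refl M).
move=> rM; split; last by rewrite (conjugates_eq rM).
by case/imsetP: rM => x xG ->; apply: objs_conj.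
Qed.

Lemma Xc_mem c L : c \in X -> L \in c -> exists2 x, x \in G & L = repr c :^ x.
Proof.
move=> cX; have [_ ec] := Xc_repr cX; rewrite {1}ec.
by case/imsetP=> x xG ->; exists x.
Qed.

Lemma Xc_sub c L : c \in X -> L \in c -> L \in Ob.
Proof.
move=> cX Lc; have [x xG ->] := Xc_mem cX Lc; apply: objs_conj => //.
by case: (Xc_repr cX).
Qed.

Lemma Xc_partition (R : Type) (idx : R) (op : Monoid.com_law idx) (F : {set gT} -> R) :
  \big[op/idx]_(c in X) \big[op/idx]_(K in c) F K = \big[op/idx]_(K in Ob) F K.
Proof.
have acts : [acts G, on Ob | 'Js].
  apply/actsP => x xG H /=; apply/idP/idP => [h|]; last by move=> OH; apply: objs_conj.
  by have := objs_conj h (groupVr xG); rewrite conjsgK.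
have := orbit_partition acts; case/and3P => /eqP cov ti _.
have eX : orbit 'Js G @: Ob = X by [].
by rewrite -cov -eX big_trivIset.
Qed.

Lemma Ob_conj_sum (F : {set gT} -> rat) x : x \in G ->
  (\sum_(K in Ob) F (K :^ x) = \sum_(K in Ob) F K)%R.
Proof.
move=> xG; rewrite [RHS](reindex_inj (@conjsg_inj _ x)) /=.
apply: eq_bigl => K; apply/idP/idP => [OK|]; first exact: objs_conj.
by move=> h; have := objs_conj h (groupVr xG); rewrite conjsgK.
Qed.

Lemma class_conj_sum (F : {set gT} -> rat) M x : x \in G ->
  (\sum_(K in M :^: G) F (K :^ x) = \sum_(K in M :^: G) F K)%R.
Proof.
move=> xG; rewrite [RHS](reindex_inj (@conjsg_inj _ x)) /=.
by apply: eq_bigl => K; rewrite conjugates_stableE.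
Qed.

Lemma fiber_sum (F : {set gT} -> rat) K :
  (\sum_(g in G) F (K :^ g) = #|'N_G(K)|%:R * \sum_(L in K :^: G) F L)%R.
Proof.
rewrite (partition_big (fun g => K :^ g) (mem (K :^: G))) /=; last first.
  by move=> g gG; apply: imset_f.
rewrite mulr_sumr; apply: eq_bigr => L /imsetP[x xG ->].
rewrite (eq_bigr (fun _ => F (K :^ x))); last by move=> g /andP[_ /eqP->].
rewrite sumr_const mulr_natl.
congr (_ *+ _)%R.
rewrite -(card_rcoset _ x); apply: eq_card => g.
rewrite [LHS]unfold_in /= mem_rcoset in_setI groupMr ?groupV //.
case gG: (g \in G) => //=.
apply/eqP/normP => [h | h]; first by rewrite conjsgM h conjsgK.
by rewrite -[in RHS]h -conjsgM mulgKV.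
Qed.

End Classes.
Section Sums.
Variables (gT : finGroupType) (G : {group gT}) (p : nat).
Implicit Types (H K L M : {set gT}).
Local Notation Ob := (objs p G).
Local Notation X := (Xc p G).
Local Open Scope ring_scope.

Lemma objs_group H : H \in Ob -> group_set H.
Proof. by case/objsP. Qed.

Lemma sum_dual H L : H \in Ob -> L \in Ob ->
  \sum_(K in Ob) (H \subset K)%:R * mu K L = (H == L)%:R.
Proof.
move=> OH OL; have gH := objs_group OH; have gL := objs_group OL.
case sHL: (H \subset L)%g; last first.
  have -> : (H == L) = false by apply/eqP => eHL; rewrite eHL subxx in sHL.
  apply: big1 => K _; case sHK: (H \subset K)%g; last by rewrite mul0r.
  rewrite mu0 ?mulr0 //; apply/negP => sKL.
  by rewrite (subset_trans sHK sKL) in sHL.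
rewrite -(mu_dual gH gL sHL) [LHS]big_mkcond [RHS]big_mkcond /=.
apply: eq_bigr => K _.
case sKL: (K \subset L)%g; last by rewrite mu0 ?sKL // !mulr0 !if_same.
case sHK: (H \subset K)%g; last by rewrite /ival sHK andbF mul0r if_same.
rewrite mul1r /ival sHK sKL !andbT.
case OK: (K \in Ob); first by rewrite (objs_group OK).
case gK: (group_set K) => //.
by rewrite (objs_up OH OL gK sHK sKL) in OK.
Qed.

Lemma sum_prim H L : H \in Ob -> L \in Ob ->
  \sum_(K in Ob) (K \subset L)%:R * mu H K = (H == L)%:R.
Proof.
move=> OH OL; have gH := objs_group OH; have gL := objs_group OL.
case sHL: (H \subset L)%g; last first.
  have -> : (H == L) = false by apply/eqP => eHL; rewrite eHL subxx in sHL.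
  apply: big1 => K _; case sKL: (K \subset L)%g; last by rewrite mul0r.
  rewrite mu0 ?mulr0 //; apply/negP => sHK.
  by rewrite (subset_trans sHK sKL) in sHL.
rewrite -(mu_sum gL sHL) [LHS]big_mkcond [RHS]big_mkcond /=.
apply: eq_bigr => K _.
case sHK: (H \subset K)%g; last by rewrite mu0 ?sHK // !mulr0 /ival sHK andbF !if_same.
case sKL: (K \subset L)%g; last by rewrite /ival sKL !andbF mul0r if_same.
rewrite mul1r /ival sHK sKL !andbT.
case OK: (K \in Ob); first by rewrite (objs_group OK).
case gK: (group_set K) => //.
by rewrite (objs_up OH OL gK sHK sKL) in OK.
Qed.

Lemma NGHK_sum H K :
  (#|NGHK G H K|%:R : rat) = \sum_(g in G) (H \subset K :^ g)%:R.
Proof.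
rewrite -sumr_const (reindex_inj invg_inj) /= big_mkcond /=.
rewrite [in RHS]big_mkcond /=; apply: eq_bigr => g _.
by rewrite inE groupV sub_conjg invgK; case: (g \in G); case: (_ \subset _).
Qed.

Lemma NGHK_class H K :
  (#|NGHK G H K|%:R : rat) = #|'N_G(K)|%:R * \sum_(L in K :^: G) (H \subset L)%:R.
Proof. by rewrite NGHK_sum (fiber_sum G (fun L => (H \subset L)%:R) K). Qed.

End Sums.
Section Generic.
Variables (gT : finGroupType) (G : {group gT}) (p : nat).
Implicit Types (H K L M : {set gT}).
Local Notation Ob := (objs p G).
Local Notation X := (Xc p G).
Local Open Scope ring_scope.

Variables (mor : {set gT} -> {set gT} -> nat) (a b : {set gT} -> rat).
Hypothesis aJ : forall H x, H \in Ob -> x \in G -> a (H :^ x) = a H.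
Hypothesis bJ : forall H x, H \in Ob -> x \in G -> b (H :^ x) = b H.
Hypothesis a0 : forall H, H \in Ob -> a H != 0.
Hypothesis b0 : forall H, H \in Ob -> b H != 0.
Hypothesis morE : forall H K, H \in Ob -> K \in Ob ->
  (mor H K)%:R * a H * b K = #|NGHK G H K|%:R.

Definition T K := \sum_(L in Ob) mu K L * a L.

Lemma T_conj K x : K \in Ob -> x \in G -> T (K :^ x) = T K.
Proof.
move=> OK xG; rewrite /T -(Ob_conj_sum p (fun L => mu (K :^ x) L * a L) xG).
by apply: eq_bigr => L OL; rewrite mu_conj aJ.
Qed.

Lemma class_a d L : d \in X -> L \in d -> a L = a (repr d).
Proof.
move=> dX Ld; have [x xG ->] := Xc_mem dX Ld.
by rewrite aJ //; case: (Xc_repr dX).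
Qed.

Lemma class_b d L : d \in X -> L \in d -> b L = b (repr d).
Proof.
move=> dX Ld; have [x xG ->] := Xc_mem dX Ld.
by rewrite bJ //; case: (Xc_repr dX).
Qed.

Lemma cmu_sum K : K \in Ob ->
  \sum_(d in X) cmu G K (repr d) * a (repr d) = (#|'N_G(K)|%:R)^-1 * T K.
Proof.
move=> OK; rewrite /T -(Xc_partition G p) mulr_sumr; apply: eq_bigr => d dX.
have [_ ed] := Xc_repr dX.
rewrite /cmu -ed -mulrA mulr_suml; congr (_ * _); apply: eq_bigr => L Ld.
by rewrite (class_a dX Ld).
Qed.


Lemma gen_weighting : is_weighting p G mor
  (fun c => b (repr c) * \sum_(d in X) cmu G (repr c) (repr d) * a (repr d)).
Proof.
move=> H OH; have aH0 := a0 OH.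
rewrite (eq_bigr (fun c : {set {set gT}} => (a H)^-1 * \sum_(K in c) (H \subset K)%:R * T K)); last first.
  move=> c cX; have [OK0 ec] := Xc_repr cX.
  set K0 := repr c in OK0 ec *.
  rewrite cmu_sum //.
  have e1 : (mor H K0)%:R * b K0 = (a H)^-1 * #|NGHK G H K0|%:R.
    by rewrite -morE //; field.
  rewrite mulrA e1 NGHK_class -ec.
  have nN : (#|'N_G(K0)|%:R : rat) != 0 by rewrite pnatr_eq0 -lt0n cardG_gt0.
  have eS : \sum_(K in c) (H \subset K)%:R * T K =
            (\sum_(K in c) (H \subset K)%:R) * T K0.
    rewrite mulr_suml; apply: eq_bigr => K Kc; congr (_ * _).
    by have [x xG ->] := Xc_mem cX Kc; rewrite T_conj.
  by rewrite eS; field; rewrite aH0 nN.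
rewrite -mulr_sumr (Xc_partition G p _ (fun K => (H \subset K)%:R * T K)) /T.
under eq_bigr do rewrite mulr_sumr.
rewrite exchange_big /=.
rewrite (eq_bigr (fun L => a L * (H == L)%:R)); last first.
  move=> L OL; rewrite -(sum_dual OH OL) mulr_sumr; apply: eq_bigr => K _.
  by rewrite mulrA mulrC.
rewrite (bigD1 H) //= eqxx mulr1 big1 ?addr0 ?mulVf // => L /andP[_ neL].
by rewrite eq_sym (negbTE neL) mulr0.
Qed.


Lemma gen_coweighting : is_coweighting p G mor
  (fun K => (#|G|%:R)^-1 * a K * \sum_(H in Ob) b H * mu H K).
Proof.
move=> K OK; have bK0 := b0 OK.
have nG : (#|G|%:R : rat) != 0 by rewrite pnatr_eq0 -lt0n cardG_gt0.
rewrite (eq_bigr (fun H => (#|G|%:R)^-1 * (b K)^-1 *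
    ((\sum_(H' in Ob) b H' * mu H' H) * \sum_(g in G) (H \subset K :^ g)%:R))); last first.
  move=> H OH; rewrite -NGHK_sum -morE //; field; by rewrite bK0 nG.
rewrite -mulr_sumr.
have step1 H' : H' \in Ob -> \sum_(H in Ob) mu H' H * \sum_(g in G) (H \subset K :^ g)%:R
    = \sum_(g in G) (H' == K :^ g)%:R.
  move=> OH'; under eq_bigr do rewrite mulr_sumr.
  rewrite exchange_big /=; apply: eq_bigr => g gG.
  rewrite -(sum_prim OH' (objs_conj OK gG)); apply: eq_bigr => H _; exact: mulrC.
have step2 : \sum_(H in Ob) (\sum_(H' in Ob) b H' * mu H' H) *
      \sum_(g in G) (H \subset K :^ g)%:R = \sum_(g in G) b (K :^ g).
  under eq_bigr do rewrite mulr_suml.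
  rewrite exchange_big /=.
  rewrite (eq_bigr (fun H' => b H' * \sum_(g in G) (H' == K :^ g)%:R)); last first.
    by move=> H' OH'; rewrite -(step1 H' OH') mulr_sumr; apply: eq_bigr => H _; rewrite mulrA.
  under eq_bigr do rewrite mulr_sumr.
  rewrite exchange_big /=; apply: eq_bigr => g gG.
  rewrite (bigD1 (K :^ g)) ?objs_conj //= eqxx mulr1 big1 ?addr0 // => H /andP[_ neH].
  by rewrite (negbTE neH) mulr0.
rewrite step2 (eq_bigr (fun _ => b K)); last by move=> g gG; rewrite bJ.
rewrite sumr_const -mulr_natr; field; by rewrite nG bK0.
Qed.

Lemma gen_e_weight :
  \sum_(c in X) b (repr c) * \sum_(d in X) cmu G (repr c) (repr d) * a (repr d)
  = \sum_(c in X) \sum_(d in X) b (repr c) * cmu G (repr c) (repr d) * a (repr d).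
Proof.
by apply: eq_bigr => c _; rewrite mulr_sumr; apply: eq_bigr => d _; rewrite mulrA.
Qed.

Lemma gen_e_coweight :
  \sum_(K in Ob) (#|G|%:R)^-1 * a K * \sum_(H in Ob) b H * mu H K
  = \sum_(c in X) \sum_(d in X) b (repr c) * cmu G (repr c) (repr d) * a (repr d).
Proof.
have nG : (#|G|%:R : rat) != 0 by rewrite pnatr_eq0 -lt0n cardG_gt0.
have -> : \sum_(K in Ob) (#|G|%:R)^-1 * a K * \sum_(H in Ob) b H * mu H K
    = (#|G|%:R)^-1 * \sum_(H in Ob) b H * T H.
  under eq_bigr do rewrite -mulrA.
  rewrite -mulr_sumr; congr (_ * _); under eq_bigr do rewrite mulr_sumr.
  rewrite exchange_big /=; apply: eq_bigr => H _.
  rewrite /T mulr_sumr; apply: eq_bigr => K _; ring.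
rewrite -(Xc_partition G p _ (fun H => b H * T H)) mulr_sumr.
apply: eq_bigr => c cX.
have [Oc ec] := Xc_repr cX; set K0 := repr c in Oc ec *.
have nN : (#|'N_G(K0)|%:R : rat) != 0 by rewrite pnatr_eq0 -lt0n cardG_gt0.
have -> : \sum_(d in X) b K0 * cmu G K0 (repr d) * a (repr d) = b K0 * (#|'N_G(K0)|%:R)^-1 * T K0.
  by rewrite -mulrA -cmu_sum // mulr_sumr; apply: eq_bigr => d _; rewrite mulrA.
have := fiber_sum G (fun H => b H * T H) K0.
have eF : \sum_(g in G) (fun H => b H * T H) (K0 :^ g) = \sum_(g in G) b K0 * T K0.
  by apply: eq_bigr => g gG /=; rewrite bJ // T_conj.
rewrite eF.
rewrite sumr_const -ec -[_ *+ #|G|]mulr_natl => eq.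
have -> : \sum_(K in c) b K * T K = (#|'N_G(K0)|%:R)^-1 * (#|G|%:R * (b K0 * T K0)).
  by rewrite eq mulKf.
field; by rewrite nN nG.
Qed.

Theorem generic_wd : weight_data p G mor
  (fun c => b (repr c) * \sum_(d in X) cmu G (repr c) (repr d) * a (repr d))
  (fun K => (#|G|%:R)^-1 * a K * \sum_(H in Ob) b H * mu H K)
  (\sum_(c in X) \sum_(d in X) b (repr c) * cmu G (repr c) (repr d) * a (repr d)).
Proof.
split; [exact: gen_weighting | exact: gen_coweighting | exact: gen_e_weight | exact: gen_e_coweight].
Qed.

End Generic.
Lemma wd_ext (gT : finGroupType) p (G : {set gT}) mor kw kw' kc kc' (e e' : rat) :
  kw =1 kw' -> kc =1 kc' -> e = e' ->
  weight_data p G mor kw kc e -> weight_data p G mor kw' kc' e'.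
Proof.
move=> h1 h2 <- [w c e1 e2]; split.
- by move=> H OH; rewrite -[RHS](w H OH); apply: eq_bigr => d _; rewrite h1.
- by move=> K OK; rewrite -[RHS](c K OK); apply: eq_bigr => d _; rewrite h2.
- by rewrite -e1; apply: eq_bigr => d _; rewrite h1.
- by rewrite -e2; apply: eq_bigr => d _; rewrite h2.
Qed.

Theorem theorem8p3 (gT : finGroupType) (G : {group gT}) (p : nat) :
  prime p ->
  let X := Xc p G in
  let O := objs p G in
  let sz (H : {set gT}) : rat := (#|H|%:R)%R in
  let cp (K : {set gT}) : rat := ((#|'C_G(K)|`_p^')%N%:R)%R in
  let cf (K : {set gT}) : rat := (#|'C_G(K)|%:R)%R in
  let iG : rat := ((#|G|%:R)^-1)%R in
  (* (i) T^c_G *)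
  weight_data p G (morT G)
    (fun c => \sum_(d in X) cmu G (repr c) (repr d))%R
    (fun K => iG * \sum_(H in O) mu H K)%R
    (\sum_(c in X) \sum_(d in X) cmu G (repr c) (repr d))%R
  (* (ii) L^c_G *)
  /\ weight_data p G (morL p G)
    (fun c => \sum_(d in X) cmu G (repr c) (repr d) * cp (repr d))%R
    (fun K => iG * cp K * \sum_(H in O) mu H K)%R
    (\sum_(c in X) \sum_(d in X) cmu G (repr c) (repr d) * cp (repr d))%R
  (* (iii) F^c_G *)
  /\ weight_data p G (morF G)
    (fun c => \sum_(d in X) cmu G (repr c) (repr d) * cf (repr d))%R
    (fun K => iG * cf K * \sum_(H in O) mu H K)%R
    (\sum_(c in X) \sum_(d in X) cmu G (repr c) (repr d) * cf (repr d))%R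
  (* (iv) O^c_G *)
  /\ weight_data p G (morO G)
    (fun c => sz (repr c) * \sum_(d in X) cmu G (repr c) (repr d))%R
    (fun K => iG * \sum_(H in O) sz H * mu H K)%R
    (\sum_(c in X) \sum_(d in X) sz (repr c) * cmu G (repr c) (repr d))%R
  (* (v) tilde F^c_G *)
  /\ weight_data p G (morFt G)
    (fun c => sz (repr c) * \sum_(d in X) cmu G (repr c) (repr d) * cp (repr d))%R
    (fun K => iG * cp K * \sum_(H in O) sz H * mu H K)%R
    (\sum_(c in X) \sum_(d in X)
        sz (repr c) * cmu G (repr c) (repr d) * cp (repr d))%R.
Proof.
move=> pr X O sz cp cf iG.
have oneJ : forall (H : {set gT}) x, H \in O -> x \in G -> (fun _ : {set gT} => 1%R : rat) (H :^ x) = (fun _ => 1%R) H by [].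
have one0 : forall H : {set gT}, H \in O -> (fun _ : {set gT} => 1%R : rat) H != 0%R by move=> *; exact: oner_neq0.
have cpJ : forall (H : {set gT}) x, H \in O -> x \in G -> cp (H :^ x) = cp H.
  by move=> H x _ xG; rewrite /cp centGJ // cardJg.
have cp0 : forall H, H \in O -> cp H != 0%R by move=> H _; rewrite /cp pnatr_eq0 -lt0n part_gt0.
have cfJ : forall (H : {set gT}) x, H \in O -> x \in G -> cf (H :^ x) = cf H.
  by move=> H x _ xG; rewrite /cf centGJ // cardJg.
have cf0 : forall H, H \in O -> cf H != 0%R by move=> H _; rewrite /cf pnatr_eq0 -lt0n cardG_gt0.
have szJ : forall (H : {set gT}) x, H \in O -> x \in G -> sz (H :^ x) = sz H.
  by move=> H x _ xG; rewrite /sz cardJg.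
have sz0 : forall H, H \in O -> sz H != 0%R.
  by move=> H OH; rewrite /sz pnatr_eq0 -lt0n (cardG_gt0 (Group (objs_group OH))).
split; [|split; [|split; [|split]]].
- apply: (wd_ext _ _ _ (generic_wd oneJ oneJ one0 one0 _)).
  + by move=> c /=; rewrite mul1r; apply: eq_bigr => d _; rewrite mulr1.
  + by move=> K /=; rewrite mulr1; congr (_ * _)%R; apply: eq_bigr => H _; rewrite mul1r.
  + by apply: eq_bigr => c _; apply: eq_bigr => d _; rewrite mul1r mulr1.
  + by move=> H K _ _; rewrite !mulr1.
- apply: (wd_ext _ _ _ (generic_wd cpJ oneJ cp0 one0 _)).
  + by move=> c /=; rewrite mul1r.
  + by move=> K /=; congr (_ * _)%R; apply: eq_bigr => H _; rewrite mul1r.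
  + by apply: eq_bigr => c _; apply: eq_bigr => d _; rewrite mul1r.
  + by move=> H K OH OK; rewrite mulr1 -natrM morL_card.
- apply: (wd_ext _ _ _ (generic_wd cfJ oneJ cf0 one0 _)).
  + by move=> c /=; rewrite mul1r.
  + by move=> K /=; congr (_ * _)%R; apply: eq_bigr => H _; rewrite mul1r.
  + by apply: eq_bigr => c _; apply: eq_bigr => d _; rewrite mul1r.
  + by move=> H K OH OK; rewrite mulr1 -natrM (morF_card OH OK).
- apply: (wd_ext _ _ _ (generic_wd oneJ szJ one0 sz0 _)).
  + by move=> c /=; congr (_ * _)%R; apply: eq_bigr => d _; rewrite mulr1.
  + by move=> K /=; rewrite mulr1.
  + by apply: eq_bigr => c _; apply: eq_bigr => d _; rewrite mulr1.
  + by move=> H K OH OK; rewrite mulr1 /sz -natrM (morO_card OH OK).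
- apply: (wd_ext _ _ _ (generic_wd cpJ szJ cp0 sz0 _)).
  + by [].
  + by [].
  + by [].
  + by move=> H K OH OK; rewrite /sz /cp -mulrA -!natrM (morFt_card OH OK).
Qed.
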